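(* For every prime $p>7$, $$H_{\frac{p-1}{2}}^{(3)}\equiv 6\,\frac{H_{p-1}}{p^2}-\frac{81}{10}\,p^2B_{p-5}\pmod{p^3}.$$
   Context: $H_n^{(r)}=\sum_{j=1}^n j^{-r}$, $H_n=H_n^{(1)}$ (for $p>3$, $H_{p-1}/p^2$ is $p$-integral). Bernoulli numbers: $\sum_{n\ge0}B_nt^n/n!=t/(e^t-1)$. Congruences are between $p$-adic integers. *)

(* Defs.v *)
From mathcomp Require Import all_boot all_order all_algebra.
Set Implicit Arguments. Unset Strict Implicit. Unset Printing Implicit Defensive.
Import Order.TTheory GRing.Theory Num.Theory.
Local Open Scope ring_scope.

Definition harm (r n : nat) : rat := \sum_(1 <= j < n.+1) ((j%:R : rat) ^+ r)^-1.

(* Bernoulli numbers with B_1 = -1/2 (convention of t/(e^t-1)), defined by the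
   standard recurrence  sum_{k=0}^{n} C(n+1,k) B_k = 0 (n >= 1), B_0 = 1.
   bern_seq n = [:: B_0; ...; B_n]. *)
Fixpoint bern_seq (n : nat) : seq rat :=
  match n with
  | 0 => [:: 1]
  | n'.+1 => let s := bern_seq n' in
      rcons s (- (\sum_(k < n'.+1) ('C(n'.+2, k))%:R * nth 0 s k) / (n'.+2)%:R)
  end.

Definition bernoulli (n : nat) : rat := nth 0 (bern_seq n) n.

Definition p_integral (p : nat) (r : rat) : bool := ~~ (p %| `|denq r|)%N.

Definition congr_mod (p k : nat) (x y : rat) : bool :=
  p_integral p ((x - y) / ((p ^ k)%N)%:R).

(* Main.v *)
Require Import Defs.
From mathcomp Require Import all_boot all_order all_algebra.
Import Order.TTheory GRing.Theory Num.Theory.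
Local Open Scope ring_scope.
From mathcomp Require Import all_boot all_order all_algebra ring lra zify.
Import Order.TTheory GRing.Theory Num.Theory.
Local Open Scope ring_scope.
Set Implicit Arguments. Unset Strict Implicit.

Section Pint.
Variable p : nat.
Hypothesis hp : prime p.

Local Notation pint := (p_integral p).

Lemma pint_frac (a b : int) : ~~ (p %| `|b|)%N -> pint (a%:~R / b%:~R).
Proof.
rewrite /p_integral => hb; apply: contra hb => hd.
have [->|b0] := eqVneq b 0; first by rewrite dvdn0.
set x := a%:~R / b%:~R : rat.
have e : numq x * b = a * denq x.
  apply/eqP; rewrite -(eqr_int rat) !rmorphM /= numqE /x; apply/eqP.
  by field; rewrite intr_eq0.
have : (`|denq x| %| `|numq x| * `|b|)%N.
  by rewrite -abszM e abszM dvdn_mull.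
rewrite Gauss_dvdr; first exact: dvdn_trans.
by rewrite coprime_sym coprime_num_den.
Qed.

Lemma pintP x : reflect (exists a b : int, ~~ (p %| `|b|)%N /\ x = a%:~R / b%:~R) (pint x).
Proof.
apply: (iffP idP) => [h|[a [b [hb ->]]]]; last exact: pint_frac.
by exists (numq x), (denq x); rewrite divq_num_den.
Qed.

Lemma ndvd_mul (b c : int) : ~~ (p %| `|b|)%N -> ~~ (p %| `|c|)%N -> ~~ (p %| `|(b * c)%R|)%N.
Proof. by move=> hb hc; rewrite abszM Euclid_dvdM // negb_or hb hc. Qed.

Lemma ndvd_neq0 (b : int) : ~~ (p %| `|b|)%N -> b%:~R != 0 :> rat.
Proof. by apply: contra; rewrite intr_eq0 => /eqP ->. Qed.

Lemma pintD x y : pint x -> pint y -> pint (x + y).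
Proof.
move=> /pintP[a [b [hb ->]]] /pintP[c [d [hd ->]]]; apply/pintP.
exists (a * d + c * b), (b * d); split; first exact: ndvd_mul.
have := ndvd_neq0 hb; have := ndvd_neq0 hd => h1 h2.
rewrite !rmorphD !rmorphM /=; field; by rewrite h1 h2.
Qed.

Lemma pintM x y : pint x -> pint y -> pint (x * y).
Proof.
move=> /pintP[a [b [hb ->]]] /pintP[c [d [hd ->]]]; apply/pintP.
exists (a * c), (b * d); split; first exact: ndvd_mul.
have := ndvd_neq0 hb; have := ndvd_neq0 hd => h1 h2.
rewrite !rmorphM /=; field; by rewrite h1 h2.
Qed.

Lemma pint_int (a : int) : pint a%:~R.
Proof. by rewrite /p_integral denq_int absz1 dvdn1 neq_ltn prime_gt1 ?orbT. Qed.

Lemma pint_nat (n : nat) : pint n%:R.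
Proof. by have := pint_int n; rewrite pmulrn. Qed.

Lemma pint0 : pint 0. Proof. exact: (pint_nat 0). Qed.
Lemma pint1 : pint 1. Proof. exact: (pint_nat 1). Qed.

Lemma pintN x : pint x -> pint (- x).
Proof. by rewrite /p_integral denqN. Qed.

Lemma pintB x y : pint x -> pint y -> pint (x - y).
Proof. by move=> hx hy; apply: pintD => //; apply: pintN. Qed.

Lemma pintX x k : pint x -> pint (x ^+ k).
Proof. by move=> hx; elim: k => [|k IH]; [exact: pint1 | rewrite exprS; apply: pintM]. Qed.

Lemma pint_sum I (r : seq I) (P : pred I) (F : I -> rat) :
  (forall i, P i -> pint (F i)) -> pint (\sum_(i <- r | P i) F i).
Proof. by move=> h; apply: (big_ind (fun x => pint x)) => //; [exact: pint0 | exact: pintD]. Qed.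

Lemma pintV_nat (d : nat) : ~~ (p %| d)%N -> pint (d%:R^-1).
Proof.
move=> hd; have := @pint_frac 1 d%:Z; rewrite absz_nat => /(_ hd).
by rewrite mul1r pmulrn.
Qed.

Lemma ndvd_lt d : (0 < d < p)%N -> ~~ (p %| d)%N.
Proof. by case/andP=> h1 h2; apply/negP => /(dvdn_leq h1); rewrite leqNgt h2. Qed.

End Pint.
Lemma size_bern n : size (bern_seq n) = n.+1.
Proof. by elim: n => //= n IH; rewrite size_rcons IH. Qed.

Lemma nth_bern n k : (k <= n)%N -> nth 0 (bern_seq n) k = bernoulli k.
Proof.
elim: n => [|n IH]; first by rewrite leqn0 => /eqP ->.
rewrite leq_eqVlt => /orP[/eqP -> //|hk].
by rewrite /= nth_rcons size_bern hk IH.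
Qed.

Lemma bern_rec n : \sum_(k < n.+2) ('C(n.+2, k))%:R * bernoulli k = 0.
Proof.
rewrite big_ord_recr /=.
have -> : bernoulli n.+1 = - (\sum_(k < n.+1) ('C(n.+2, k))%:R * bernoulli k) / (n.+2)%:R.
  rewrite {1}/bernoulli /= nth_rcons size_bern ltnn eqxx.
  congr (- _ / _); apply: eq_bigr => k _; by rewrite nth_bern // -ltnS.
rewrite binSn; field.
by apply: lt0r_neq0; have := ler0n rat n; lra.
Qed.

Section PowSum.
Variable p : nat.
Hypothesis hp : prime p.
Local Notation pint := (p_integral p).
Local Notation P := (p%:R : rat).

Definition S i := \sum_(0 <= j < p) (j%:R : rat) ^+ i.

Lemma pow_rec M : (0 < M)%N -> P ^+ M = \sum_(i < M) ('C(M, i))%:R * S i.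
Proof.
move=> hM.
have -> : P ^+ M = \sum_(0 <= j < p) ((j.+1)%:R ^+ M - (j%:R : rat) ^+ M).
  rewrite telescope_sumr // expr0n; case: M hM => // M _; by rewrite subr0.
under eq_bigr => j _.
  rewrite -addn1 natrD [_ + 1]addrC exprDn big_ord_recr /= subnn expr0 mul1r binn mulr1n.
  rewrite addrK.
  under eq_bigr => i _ do rewrite expr1n mul1r -mulr_natl.
  over.
rewrite exchange_big /=; apply: eq_bigr => i _.
by rewrite /S mulr_sumr.
Qed.

Lemma bernS n : bernoulli n.+1 =
  - (\sum_(k < n.+1) ('C(n.+2, k))%:R * bernoulli k) / (n.+2)%:R.
Proof.
rewrite {1}/bernoulli /= nth_rcons size_bern ltnn eqxx.
congr (- _ / _); apply: eq_bigr => k _; by rewrite nth_bern // -ltnS.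
Qed.

Lemma p_gt1 : (1 < p)%N. Proof. exact: prime_gt1. Qed.

Lemma bern_pint k : (k <= p - 2)%N -> pint (bernoulli k).
Proof.
elim/ltn_ind: k => -[|k] IH hk; first exact: (pint1 hp).
rewrite bernS; apply: (pintM hp).
  apply: pintN; apply: (pint_sum hp) => i _; apply: (pintM hp (pint_nat hp _)).
  apply: IH => //; have := ltn_ord i; lia.
apply: pintV_nat; apply: ndvd_lt; have := p_gt1; lia.
Qed.

Lemma P_neq0 : P != 0.
Proof. by rewrite pnatr_eq0 -lt0n prime_gt0. Qed.

Lemma sum_cong m : (m <= p - 2)%N -> pint ((S m - P * bernoulli m) / P ^+ 2).
Proof.
elim/ltn_ind: m => -[|m] IH hm.
  have -> : S 0 = P.
    rewrite /S (eq_bigr (fun _ => 1)) => [|i _]; last by rewrite expr0.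
    by rewrite sumr_const_nat subn0.
  by rewrite /bernoulli /= mulr1 subrr mul0r; exact: pint0.
set A := \sum_(i < m.+1) ('C(m.+2, i))%:R * S i.
set Bs := \sum_(i < m.+1) ('C(m.+2, i))%:R * bernoulli i.
have E1 : P ^+ m.+2 = A + (m.+2)%:R * S m.+1.
  by rewrite pow_rec // big_ord_recr /= binSn.
have E2 : Bs + (m.+2)%:R * bernoulli m.+1 = 0.
  by have := bern_rec m; rewrite big_ord_recr /= binSn.
have E3 : \sum_(i < m.+1) ('C(m.+2, i))%:R * ((S i - P * bernoulli i) / P ^+ 2)
   = (A - P * Bs) / P ^+ 2.
  rewrite /A /Bs mulr_sumr -sumrB mulr_suml; apply: eq_bigr => i _.
  by field; exact: P_neq0.
have hm2 : (m.+2)%:R != 0 :> rat by rewrite pnatr_eq0.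
have hP := P_neq0.
have key : (S m.+1 - P * bernoulli m.+1) / P ^+ 2 =
  ((m.+2)%:R)^-1 * (P ^+ m - \sum_(i < m.+1) ('C(m.+2, i))%:R * ((S i - P * bernoulli i) / P ^+ 2)).
  rewrite E3.
  have -> : A = P ^+ m.+2 - (m.+2)%:R * S m.+1 by rewrite E1 addrK.
  have -> : Bs = - ((m.+2)%:R * bernoulli m.+1) by apply/eqP; rewrite -addr_eq0 E2.
  rewrite !exprS; field.
  by rewrite hP /=; apply: lt0r_neq0; have := ler0n rat m; lra.
rewrite key; apply: (pintM hp).
  apply: pintV_nat; apply: ndvd_lt; lia.
apply: (pintB hp); first by apply: (pintX hp _ (pint_nat hp _)).
apply: (pint_sum hp) => i _; apply: (pintM hp (pint_nat hp _)).
apply: IH => //; have := ltn_ord i; lia.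
Qed.
End PowSum.

Lemma split_par0 (f : nat -> rat) n :
  \sum_(1 <= j < (n.*2).+1) f j = \sum_(1 <= i < n.+1) (f (i.*2) + f (i.*2).-1).
Proof.
elim: n => [|n IH]; first by rewrite !big_geq.
rewrite doubleS (big_nat_recr n.*2.+2) // (big_nat_recr n.*2.+1) // IH.
rewrite (big_nat_recr n.+1) //= doubleS /=.
by rewrite -!addrA (addrC (f _)).
Qed.

Lemma split_par (f : nat -> rat) n :
  \sum_(1 <= j < (n.*2).+1) f j = \sum_(1 <= i < n.+1) (f (i.*2) + f ((n.*2).+1 - i.*2)%N).
Proof.
rewrite split_par0 !big_split /=; congr (_ + _).
rewrite big_nat_rev; apply: eq_big_nat => i /andP[h1 h2]; congr f.
lia.
Qed.

Lemma split_pair (f : nat -> rat) n :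
  \sum_(1 <= j < (n.*2).+1) f j = \sum_(1 <= i < n.+1) (f i + f ((n.*2).+1 - i)%N).
Proof.
rewrite big_split /= (@big_cat_nat _ _ _ n.+1) //=; last lia.
congr (_ + _).
rewrite big_nat_rev /= -{1}(add1n n) big_addn.
have -> : ((n.*2).+1 - n = n.+1)%N by lia.
apply: eq_big_nat => i /andP[h1 h2]; congr f; lia.
Qed.

Lemma sum_lin4 n (f g1 g2 g3 g4 w : nat -> rat) (c1 c2 c3 c4 K : rat) :
  (forall i, (1 <= i < n.+1)%N -> f i = c1 * g1 i + c2 * g2 i + c3 * g3 i + c4 * g4 i + K * w i) ->
  \sum_(1 <= i < n.+1) f i = c1 * \sum_(1 <= i < n.+1) g1 i + c2 * \sum_(1 <= i < n.+1) g2 i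
    + c3 * \sum_(1 <= i < n.+1) g3 i + c4 * \sum_(1 <= i < n.+1) g4 i + K * \sum_(1 <= i < n.+1) w i.
Proof. by move=> h; rewrite (eq_big_nat _ _ h) !big_split /= -!mulr_sumr. Qed.

Lemma sum_lin2 n (f g1 g2 w : nat -> rat) (c1 c2 K : rat) :
  (forall i, (1 <= i < n.+1)%N -> f i = c1 * g1 i + c2 * g2 i + K * w i) ->
  \sum_(1 <= i < n.+1) f i = c1 * \sum_(1 <= i < n.+1) g1 i + c2 * \sum_(1 <= i < n.+1) g2 i
    + K * \sum_(1 <= i < n.+1) w i.
Proof. by move=> h; rewrite (eq_big_nat _ _ h) !big_split /= -!mulr_sumr. Qed.

Fixpoint bw (u v P : rat) (m : nat) : rat :=
  match m with
  | 0 => 0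
  | m'.+1 => u * bw u v P m' + (m'.+1)%:R * v ^+ 2 * u ^+ m' + P * v * bw u v P m'
  end.

Lemma bwE (u v P : rat) m :
  (u + P * v) ^+ m.+1 = u ^+ m.+1 + ((m.+1)%:R * P * v) * u ^+ m + P ^+ 2 * bw u v P m.
Proof.
elim: m => [|m IH]; first by rewrite /= !expr1 expr0 mulr0 addr0 mul1r mulr1.
by rewrite exprS IH /= !exprS; ring.
Qed.

Section Binom.
Variable p : nat.
Hypothesis hp : prime p.
Local Notation pint := (p_integral p).
Local Notation P := (p%:R : rat).

Lemma binom2 (u v : rat) m : pint u -> pint v -> exists w : rat, pint w /\
  (u + P * v) ^+ m.+1 = u ^+ m.+1 + ((m.+1)%:R * P * v) * u ^+ m + P ^+ 2 * w.
Proof.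
move=> hu hv; elim: m => [|m [w [hw e]]].
  by exists 0; split; [exact: pint0 | rewrite !expr1 expr0 mulr0 addr0 mul1r mulr1].
exists (u * w + (m.+1)%:R * v ^+ 2 * u ^+ m + P * v * w); split.
  apply: (pintD hp); first apply: (pintD hp).
  - exact: (pintM hp).
  - by apply: (pintM hp); [apply: (pintM hp); [exact: pint_nat | exact: pintX] | exact: pintX].
  - by apply: (pintM hp) => //; apply: (pintM hp) => //; exact: pint_nat.
rewrite exprS e !exprS; ring.
Qed.
End Binom.

Lemma t1 (x P : rat) : x != 0 -> P - x != 0 ->
  (x^+1)^-1 + ((P-x)^+1)^-1 = (-P) * (x^+2)^-1 + (-P^+2) * (x^+3)^-1 + (-P^+3)*(x^+4)^-1
   + (-P^+4)*(x^+5)^-1 + P^+5 * ((x^-1)^+5 * (P-x)^-1).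
Proof. move=> hx hpx; field; by rewrite hx hpx. Qed.

Lemma t2 (x P : rat) : x != 0 -> P - 2 * x != 0 ->
  ((2 * x)^+1)^-1 + ((P- 2 * x)^+1)^-1 = (-P/4) * (x^+2)^-1 + (-P^+2/8) * (x^+3)^-1 + (-P^+3/16)*(x^+4)^-1
   + (-P^+4/32)*(x^+5)^-1 + P^+5 * ((2^-1)^+5 * (x^-1)^+5 * (P- 2 * x)^-1).
Proof. move=> hx hpx; field; by rewrite hx hpx. Qed.

Lemma t3 (x P : rat) : x != 0 -> P - x != 0 ->
  (x^+4)^-1 + ((P-x)^+4)^-1 = 2 * (x^+4)^-1 + (4 * P) * (x^+5)^-1
   + P^+2 * ((10 * x^+3 - 20 * P * x^+2 + 15 * P^+2 * x - 4 * P^+3) * ((x^-1)^+5 * ((P-x)^-1)^+4)).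
Proof. move=> hx hpx; field; by rewrite hx hpx. Qed.

Lemma t4 (x P : rat) : x != 0 -> P - 2 * x != 0 ->
  ((2 * x)^+4)^-1 + ((P- 2 * x)^+4)^-1 = (1/8) * (x^+4)^-1 + (P/8) * (x^+5)^-1
   + P^+2 * ((10 * (2 * x)^+3 - 20 * P * (2 * x)^+2 + 15 * P^+2 * (2 * x) - 4 * P^+3)
        * ((2^-1)^+5 * (x^-1)^+5 * ((P- 2 * x)^-1)^+4)).
Proof. move=> hx hpx; field; by rewrite hx hpx. Qed.

Lemma alg1 (P F1 F4 a2 a3 a4 a5 B V W1 W2 W3 W4 : rat) : P != 0 ->
  F1 - ((-P) * a2 + (-P^+2) * a3 + (-P^+3) * a4 + (-P^+4) * a5 + P^+5 * W1) = 0 ->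
  F1 - ((-P/4) * a2 + (-P^+2/8) * a3 + (-P^+3/16) * a4 + (-P^+4/32) * a5 + P^+5 * W2) = 0 ->
  F4 - (2 * a4 + (4 * P) * a5 + P^+2 * W3) = 0 ->
  F4 - ((1/8) * a4 + (P/8) * a5 + P^+2 * W4) = 0 ->
  a5 - (-6 * B + P * V) = 0 ->
  (a3 - (6 * (F1 / P^+2) - (81/10) * P^+2 * B)) / P^+3 =
   27 * (2^-1)^+2 * 5^-1 * V - 4 * 5^-1 * (W4 - W3) - 2 * (4 * W2 - W1).
Proof.
move=> hP d1 d2 d3a d3b dv.
have -> : (a3 - (6 * (F1 / P^+2) - (81/10) * P^+2 * B)) / P^+3 =
   27 * (2^-1)^+2 * 5^-1 * V - 4 * 5^-1 * (W4 - W3) - 2 * (4 * W2 - W1)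
   + ((27/20) * P^+2 * (a5 - (-6 * B + P * V))
      - (4/5) * P * ((F4 - ((1/8) * a4 + (P/8) * a5 + P^+2 * W4)) - (F4 - (2 * a4 + (4 * P) * a5 + P^+2 * W3)))
      - (2 / P^+2) * (4 * (F1 - ((-P/4) * a2 + (-P^+2/8) * a3 + (-P^+3/16) * a4 + (-P^+4/32) * a5 + P^+5 * W2))
                      - (F1 - ((-P) * a2 + (-P^+2) * a3 + (-P^+3) * a4 + (-P^+4) * a5 + P^+5 * W1)))) / P^+3.
  by field.
by rewrite d1 d2 d3a d3b dv !(mulr0, subrr, subr0) mul0r addr0.
Qed.

Lemma alg2 (P a5 B A0 A1 S T Z m W5 W6 W7 W8 : rat) : P != 0 ->
  a5 - (A1 + P * W7) = 0 ->
  S - (2 * A0 + (- m * P) * A1 + P ^+ 2 * W5) = 0 ->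
  S - ((2 * (2 * T)) * A0 + (- m * P * T) * A1 + P ^+ 2 * W6) = 0 ->
  S - (P * B + P ^+ 2 * W8) = 0 ->
  64 * T - (2 + P * Z) = 0 ->
  m - (P - 5) = 0 ->
  a5 - (-6 * B + P * ((Z * B + 32 * ((2 * T - 1) * W8 + T * A1 - 2 * T * W5 + W6) - 5 * 2^-1 * Z * A1) * 5^-1 + W7)) = 0.
Proof.
move=> hP d7 d5a d5b d6 d8 dm.
have -> : a5 - (-6 * B + P * ((Z * B + 32 * ((2 * T - 1) * W8 + T * A1 - 2 * T * W5 + W6) - 5 * 2^-1 * Z * A1) * 5^-1 + W7))
  = (a5 - (A1 + P * W7)) + ((64 * T - (2 + P * Z)) * (B - (5/2) * A1)
      - 32 * ((2 * T * (S - (2 * A0 + (- m * P) * A1 + P ^+ 2 * W5))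
               - (S - ((2 * (2 * T)) * A0 + (- m * P * T) * A1 + P ^+ 2 * W6))
               - (2 * T - 1) * (S - (P * B + P ^+ 2 * W8))
               - (m - (P - 5)) * P * T * A1) / P)) / 5.
  by field.
by rewrite d7 d5a d5b d6 d8 dm; field.
Qed.

Section Main.
Variable p : nat.
Hypothesis hp : prime p.
Hypothesis hp7 : (7 < p)%N.
Variable n : nat.
Hypothesis hn : p = (n.*2).+1.
Local Notation pint := (p_integral p).
Local Notation P := (p%:R : rat).

Lemma pint_sumn m k (F : nat -> rat) :
  (forall i, (m <= i < k)%N -> pint (F i)) -> pint (\sum_(m <= i < k) F i).
Proof.
move=> h; rewrite big_nat_cond; apply: (pint_sum hp) => i /andP[hi _]; exact: h.
Qed.

Lemma u1 i : (1 <= i < n.+1)%N -> (i%:R : rat) != 0.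
Proof. by move=> h; rewrite pnatr_eq0 -lt0n; case/andP: h. Qed.

Lemma u1V i : (1 <= i < n.+1)%N -> pint (i%:R^-1).
Proof. by move=> h; apply: pintV_nat; apply: ndvd_lt; lia. Qed.

Lemma u2 i : (1 <= i < n.+1)%N -> (((p - i)%N)%:R : rat) = P - i%:R.
Proof. by move=> h; rewrite natrB //; lia. Qed.

Lemma u2n i : (1 <= i < n.+1)%N -> P - i%:R != 0.
Proof. by move=> h; rewrite -u2 // pnatr_eq0; lia. Qed.

Lemma u2V i : (1 <= i < n.+1)%N -> pint ((P - i%:R)^-1).
Proof. by move=> h; rewrite -u2 //; apply: pintV_nat; apply: ndvd_lt; lia. Qed.

Lemma u3 i : (1 <= i < n.+1)%N -> (((p - i.*2)%N)%:R : rat) = P - 2 * i%:R.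
Proof. by move=> h; rewrite natrB; [rewrite -muln2 natrM mulrC | lia]. Qed.

Lemma u3n i : (1 <= i < n.+1)%N -> P - 2 * i%:R != 0.
Proof. by move=> h; rewrite -u3 // pnatr_eq0; lia. Qed.

Lemma u3V i : (1 <= i < n.+1)%N -> pint ((P - 2 * i%:R)^-1).
Proof. by move=> h; rewrite -u3 //; apply: pintV_nat; apply: ndvd_lt; lia. Qed.

Lemma d2 i : ((i.*2)%:R : rat) = 2 * i%:R.
Proof. by rewrite -muln2 natrM mulrC. Qed.

Lemma pint2 : pint (2^-1). Proof. by apply: pintV_nat; apply: ndvd_lt; lia. Qed.
Lemma pint3 : pint (3^-1). Proof. by apply: pintV_nat; apply: ndvd_lt; lia. Qed.
Lemma pint5 : pint (5^-1). Proof. by apply: pintV_nat; apply: ndvd_lt; lia. Qed.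

Ltac pauto := match goal with
  | |- is_true (p_integral _ (_ + _)) => apply: (pintD hp); pauto
  | |- is_true (p_integral _ (- _)) => apply: pintN; pauto
  | |- is_true (p_integral _ (_ * _)) => apply: (pintM hp); pauto
  | |- is_true (p_integral _ (_ ^+ _)) => apply: (pintX hp); pauto
  | |- is_true (p_integral _ (_ %:R)) => exact: (pint_nat hp _)
  | _ => assumption
  end.

Lemma I1 : exists W, pint W /\ harm 1 (n.*2) = (-P) * harm 2 n + (-P^+2) * harm 3 n
   + (-P^+3) * harm 4 n + (-P^+4) * harm 5 n + P^+5 * W.
Proof.
eexists; split; last first.
  rewrite /harm split_pair -hn.
  rewrite (@sum_lin4 n _ (fun i => ((i%:R)^+2)^-1) (fun i => ((i%:R)^+3)^-1)
     (fun i => ((i%:R)^+4)^-1) (fun i => ((i%:R)^+5)^-1)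
     (fun i => (i%:R^-1)^+5 * (P - i%:R)^-1) (-P) (-P^+2) (-P^+3) (-P^+4) (P^+5)); first reflexivity.
  by move=> i hi; rewrite u2 //; apply: t1; [exact: u1 | exact: u2n].
apply: pint_sumn => i hi.
have := u1V hi; have := u2V hi => *; pauto.
Qed.

Lemma I2 : exists W, pint W /\ harm 1 (n.*2) = (-P/4) * harm 2 n + (-P^+2/8) * harm 3 n
   + (-P^+3/16) * harm 4 n + (-P^+4/32) * harm 5 n + P^+5 * W.
Proof.
eexists; split; last first.
  rewrite /harm split_par -hn.
  rewrite (@sum_lin4 n _ (fun i => ((i%:R)^+2)^-1) (fun i => ((i%:R)^+3)^-1)
     (fun i => ((i%:R)^+4)^-1) (fun i => ((i%:R)^+5)^-1)
     (fun i => (2^-1)^+5 * (i%:R^-1)^+5 * (P - 2 * i%:R)^-1) (-P/4) (-P^+2/8) (-P^+3/16) (-P^+4/32) (P^+5));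
    first reflexivity.
  by move=> i hi; rewrite u3 // d2; apply: t2; [exact: u1 | exact: u3n].
apply: pint_sumn => i hi.
have := u1V hi; have := u3V hi; have := pint2 => *; pauto.
Qed.

Lemma I3a : exists W, pint W /\ harm 4 (n.*2) = 2 * harm 4 n + (4 * P) * harm 5 n + P^+2 * W.
Proof.
eexists; split; last first.
  rewrite /harm split_pair -hn.
  rewrite (@sum_lin2 n _ (fun i => ((i%:R)^+4)^-1) (fun i => ((i%:R)^+5)^-1)
     (fun i => (10 * i%:R^+3 - 20 * P * i%:R^+2 + 15 * P^+2 * i%:R - 4 * P^+3) * ((i%:R^-1)^+5 * ((P-i%:R)^-1)^+4))
     2 (4 * P) (P^+2)); first reflexivity.
  by move=> i hi; rewrite u2 //; apply: t3; [exact: u1 | exact: u2n].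
apply: pint_sumn => i hi.
have := u1V hi; have := u2V hi => *; pauto.
Qed.

Lemma I3b : exists W, pint W /\ harm 4 (n.*2) = (1/8) * harm 4 n + (P/8) * harm 5 n + P^+2 * W.
Proof.
eexists; split; last first.
  rewrite /harm split_par -hn.
  rewrite (@sum_lin2 n _ (fun i => ((i%:R)^+4)^-1) (fun i => ((i%:R)^+5)^-1)
     (fun i => (10 * (2 * i%:R)^+3 - 20 * P * (2 * i%:R)^+2 + 15 * P^+2 * (2 * i%:R) - 4 * P^+3)
        * ((2^-1)^+5 * (i%:R^-1)^+5 * ((P- 2 * i%:R)^-1)^+4))
     (1/8) (P/8) (P^+2)); first reflexivity.
  by move=> i hi; rewrite u3 // d2; apply: t4; [exact: u1 | exact: u3n].
apply: pint_sumn => i hi.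
have := u1V hi; have := u3V hi; have := pint2 => *; pauto.
Qed.

Lemma pint_bw u v m : pint u -> pint v -> pint (bw u v P m).
Proof.
move=> hu hv; elim: m => [|m IH] /=; first exact: pint0.
pauto.
Qed.

Definition A k := \sum_(1 <= i < n.+1) (i%:R : rat) ^+ k.

Lemma hM : (p - 5 = (p - 6).+1)%N. Proof. lia. Qed.
Lemma oddM : odd (p - 6).
Proof. have -> : (p - 6 = ((n - 3).*2).+1)%N by lia. by rewrite /= odd_double. Qed.

Lemma negx_even (x : rat) : (- x) ^+ (p - 5) = x ^+ (p - 5).
Proof. by rewrite exprNn -signr_odd hM /= oddM /= expr0 mul1r. Qed.

Lemma negx_odd (x : rat) : (- x) ^+ (p - 6) = - x ^+ (p - 6).
Proof. by rewrite exprNn -signr_odd oddM expr1 mulN1r. Qed.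

Lemma t5 (x : rat) : x ^+ (p - 5) + (P - x) ^+ (p - 5) =
  2 * x ^+ (p - 5) + (- ((p - 5)%N%:R) * P) * x ^+ (p - 6) + P ^+ 2 * bw (- x) 1 P (p - 6).
Proof.
have e := bwE (- x) 1 P (p - 6); rewrite -hM negx_even negx_odd mulr1 addrC in e.
by rewrite e; ring.
Qed.

Lemma t6 (x : rat) : (2 * x) ^+ (p - 5) + (P - 2 * x) ^+ (p - 5) =
  (2 * 2 ^+ (p - 5)) * x ^+ (p - 5) + (- ((p - 5)%N%:R) * P * 2 ^+ (p - 6)) * x ^+ (p - 6)
  + P ^+ 2 * bw (- (2 * x)) 1 P (p - 6).
Proof.
have e := bwE (- (2 * x)) 1 P (p - 6); rewrite -hM negx_even negx_odd mulr1 addrC in e.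
by rewrite e !exprMn; ring.
Qed.

Lemma S_split : S p (p - 5) = \sum_(1 <= j < (n.*2).+1) (j%:R : rat) ^+ (p - 5).
Proof. by rewrite /S big_ltn ?prime_gt0 // expr0n hM /= add0r -hn. Qed.

Lemma I5a : exists W, pint W /\ S p (p - 5) = 2 * A (p - 5) + (- ((p - 5)%N%:R) * P) * A (p - 6) + P ^+ 2 * W.
Proof.
eexists; split; last first.
  rewrite S_split split_pair -hn /A.
  rewrite (@sum_lin2 n _ (fun i => (i%:R : rat) ^+ (p - 5)) (fun i => (i%:R : rat) ^+ (p - 6))
     (fun i => bw (- i%:R) 1 P (p - 6)) 2 (- ((p - 5)%N%:R) * P) (P ^+ 2)); first reflexivity.
  by move=> i hi; rewrite u2 // t5.
apply: pint_sumn => i hi; apply: pint_bw; [apply: pintN; exact: (pint_nat hp _) | exact: pint1].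
Qed.

Lemma I5b : exists W, pint W /\ S p (p - 5) = (2 * 2 ^+ (p - 5)) * A (p - 5)
  + (- ((p - 5)%N%:R) * P * 2 ^+ (p - 6)) * A (p - 6) + P ^+ 2 * W.
Proof.
eexists; split; last first.
  rewrite S_split split_par -hn /A.
  rewrite (@sum_lin2 n _ (fun i => (i%:R : rat) ^+ (p - 5)) (fun i => (i%:R : rat) ^+ (p - 6))
     (fun i => bw (- (2 * i%:R)) 1 P (p - 6)) (2 * 2 ^+ (p - 5)) (- ((p - 5)%N%:R) * P * 2 ^+ (p - 6)) (P ^+ 2));
    first reflexivity.
  by move=> i hi; rewrite u3 // d2 t6.
apply: pint_sumn => i hi; apply: pint_bw; [pauto | exact: pint1].
Qed.

Lemma fermatQ a : ((a%:R : rat) ^+ p) = a%:R + P * (((a ^ p) %/ p)%:R - (a %/ p)%:R).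
Proof.
have h := fermat_little a hp.
have E1 : (((a ^ p)%N)%:R : rat) = ((a ^ p) %/ p)%:R * P + ((a ^ p) %% p)%:R.
  by rewrite {1}(divn_eq (a ^ p) p) natrD natrM.
have E2 : ((a %% p)%:R : rat) = a%:R - (a %/ p)%:R * P.
  have := congr1 (fun k => (k%:R : rat)) (divn_eq a p); rewrite /= natrD natrM => ->; ring.
rewrite -natrX E1 h E2; ring.
Qed.

Definition wF (i : nat) : rat := - ((((i ^ p) %/ p)%:R - (i %/ p)%:R) * (i%:R^-1) ^+ 6).

Lemma fermat_term i : (1 <= i < n.+1)%N ->
  ((i%:R : rat) ^+ 5)^-1 = i%:R ^+ (p - 6) + P * wF i.
Proof.
move=> hi; have hx := u1 hi.
have e := fermatQ i.
have hp6 : p = ((p - 6) + 6)%N by lia.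
rewrite {1}hp6 exprD in e.
apply/eqP; rewrite -subr_eq0 /wF.
have -> : (i%:R ^+ 5)^-1 - (i%:R ^+ (p - 6) + P * (- ((((i ^ p) %/ p)%:R - (i %/ p)%:R) * (i%:R^-1) ^+ 6)))
  = (i%:R^-1) ^+ 6 * (i%:R + P * ((((i ^ p) %/ p)%:R - (i %/ p)%:R)) - i%:R ^+ (p - 6) * i%:R ^+ 6).
  by field.
by rewrite -e subrr mulr0.
Qed.

Lemma I7 : exists W, pint W /\ harm 5 n = A (p - 6) + P * W.
Proof.
exists (\sum_(1 <= i < n.+1) wF i); split.
  apply: pint_sumn => i hi; have := u1V hi => *; rewrite /wF; pauto.
by rewrite /harm /A (eq_big_nat _ _ fermat_term) big_split /= -mulr_sumr.
Qed.

End Main.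

Section Main2.
Variable p : nat.
Hypothesis hp : prime p.
Hypothesis hp7 : (7 < p)%N.
Variable n : nat.
Hypothesis hn : p = (n.*2).+1.
Local Notation pint := (p_integral p).
Local Notation P := (p%:R : rat).

Ltac pauto := match goal with
  | |- is_true (p_integral _ (_ + _)) => apply: (pintD hp); pauto
  | |- is_true (p_integral _ (- _)) => apply: pintN; pauto
  | |- is_true (p_integral _ (_ * _)) => apply: (pintM hp); pauto
  | |- is_true (p_integral _ (_ ^+ _)) => apply: (pintX hp); pauto
  | |- is_true (p_integral _ (_ %:R)) => exact: (pint_nat hp _)
  | |- is_true (p_integral _ 1) => exact: (pint1 hp)
  | _ => assumption
  end.
Lemma main_n : pint ((harm 3 n - (6 * (harm 1 (n.*2) / P^+2) - (81/10) * P^+2 * bernoulli (p - 5))) / P^+3).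
Proof.
have [W1 [h1 e1]] := I1 hp hp7 hn.
have [W2 [h2 e2]] := I2 hp hp7 hn.
have [W3 [h3 e3]] := I3a hp hp7 hn.
have [W4 [h4 e4]] := I3b hp hp7 hn.
have [W5 [h5 e5]] := I5a hp hp7 hn.
have [W6 [h6 e6]] := I5b hp hp7 hn.
have [W7 [h7 e7]] := I7 hp hp7 hn.
have hw8 : pint ((S p (p - 5) - P * bernoulli (p - 5)) / P ^+ 2) by apply: (sum_cong hp); lia.
set W8 := (S p (p - 5) - P * bernoulli (p - 5)) / P ^+ 2 in hw8 *.
have hp6 : p = ((p - 6) + 6)%N by lia.
have hp5 : (5 <= p)%N by lia.
have hB : pint (bernoulli (p - 5)) by apply: (bern_pint hp); lia.
set T := (2 : rat) ^+ (p - 6).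
set Z := (((2 ^ p) %/ p)%:R - (2 %/ p)%:R : rat).
have hT : pint T by rewrite /T; pauto.
have hZ : pint Z by rewrite /Z; pauto.
have hA1 : pint (A n (p - 6)) by apply: (pint_sumn hp) => i _; pauto.
have h2T : (2 : rat) ^+ (p - 5) = 2 * T by rewrite /T (hM hp hp7 hn) exprS.
have hP := P_neq0 hp.
have d8 : 64 * T - (2 + P * Z) = 0.
  have := fermatQ hp 2.
  rewrite {1}hp6 exprD => e; rewrite /T /Z -e; ring.
have dm : ((p - 5)%N%:R : rat) - (P - 5) = 0 by rewrite natrB ?subrr.
have d6 : S p (p - 5) - (P * bernoulli (p - 5) + P ^+ 2 * W8) = 0 by rewrite /W8; field.
have d7 : harm 5 n - (A n (p - 6) + P * W7) = 0 by rewrite e7 subrr.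
have d5a : S p (p - 5) - (2 * A n (p - 5) + (- ((p - 5)%N%:R) * P) * A n (p - 6) + P ^+ 2 * W5) = 0.
  by rewrite {1}e5 subrr.
have d5b : S p (p - 5) - ((2 * (2 * T)) * A n (p - 5) + (- ((p - 5)%N%:R) * P * T) * A n (p - 6) + P ^+ 2 * W6) = 0.
  by rewrite {1}e6 h2T subrr.
have hv := alg2 hP d7 d5a d5b d6 d8 dm.
have d1 : harm 1 (n.*2) - ((-P) * harm 2 n + (-P^+2) * harm 3 n + (-P^+3) * harm 4 n + (-P^+4) * harm 5 n + P^+5 * W1) = 0.
  by rewrite {1}e1 subrr.
have d2 : harm 1 (n.*2) - ((-P/4) * harm 2 n + (-P^+2/8) * harm 3 n + (-P^+3/16) * harm 4 n + (-P^+4/32) * harm 5 n + P^+5 * W2) = 0.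
  by rewrite {1}e2 subrr.
have d3 : harm 4 (n.*2) - (2 * harm 4 n + (4 * P) * harm 5 n + P^+2 * W3) = 0 by rewrite {1}e3 subrr.
have d4 : harm 4 (n.*2) - ((1/8) * harm 4 n + (P/8) * harm 5 n + P^+2 * W4) = 0 by rewrite {1}e4 subrr.
rewrite (alg1 hP d1 d2 d3 d4 hv).
have := pint2 hp hp7 hn; have := pint5 hp hp7 hn => *.
pauto.
Qed.
End Main2.

Unset Implicit Arguments.
Theorem lemma3p1 (p : nat) (hp : prime p) (hp7 : (7 < p)%N) :
  congr_mod p 3 (harm 3 (p.-1)./2)
    (6 * (harm 1 p.-1 / ((p ^ 2)%N)%:R)
     - (81%:R / 10%:R) * ((p ^ 2)%N)%:R * bernoulli (p - 5)).
Proof.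
have ho : odd p.
  by case: (even_prime hp) => // h; rewrite h in hp7.
have hp0 : (0 < p)%N by exact: prime_gt0.
have hodd : odd p.-1 = false.
  by move: ho; rewrite -{1}(prednK hp0) oddS; case: (odd p.-1).
have e1 : ((p.-1)./2).*2 = p.-1.
  by have := odd_double_half p.-1; rewrite hodd add0n.
have hn : p = (((p.-1)./2).*2).+1 by rewrite e1 prednK.
rewrite /congr_mod !natrX.
have -> : harm 1 p.-1 = harm 1 ((p.-1)./2).*2 by rewrite e1.
exact: (main_n hp hp7 hn).
Qed.
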